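(* Let $I$ be a set. Let $T_1,T_2$ be nonempty $I$-colored binary plane trees and let $v$ be a vertex of $T_1$. Then the multiset $\mathsf{IF}(\nabla_v(T_1,T_2))$ of insertion factors of the insertion $\nabla_v(T_1,T_2)$ is the multiset union of $\mathsf{IF}(T_1)$ and $\mathsf{IF}(T_2)$.
   Context: A binary plane tree is a rooted tree in which each child of a vertex is designated as a left child or a right child, and no vertex has more than one left child or more than one right child; trees are considered up to isomorphism, and the empty tree $\varnothing$ is allowed. The left (right) subtree of a vertex is the subtree rooted at its left (right) child. A branch is a nonempty binary plane tree in which every vertex has at most one child. Let $\boxminus$ be a special symbol not a vertex of any tree. An $I$-coloring of a binary plane tree $T$ is a function $\chi\colon T\sqcup\{\boxminus\}\to I$ (here $T$ also denotes its vertex set); an $I$-colored binary plane tree is a binary plane tree together with an $I$-coloring. Insertion: for nonempty $I$-colored trees $T_1,T_2$ with colorings $\chi_1,\chi_2$ and a vertex $v$ of $T_1$, the tree $\nabla_v(T_1,T_2)$ is formed as follows: replace $v$ by a left edge, i.e. create a new vertex $v^*$ that takes the place of $v$ in $T_1$ (attached to $v$'s former parent on the same side), and make $v$ (with its subtrees) the left child of $v^*$; then attach $T_2$ as the right subtree of $v^*$. Its coloring $\chi$ satisfies $\chi(u)=\chi_1(u)$ for $u\in T_1\sqcup\{\boxminus\}$, $\chi(u')=\chi_2(u')$ for $u'\in T_2$, and $\chi(v^* )=\chi_2(\boxminus)$. Insertion factors: for a nonempty $I$-colored tree $T$, let $\Lambda_T$ consist of $\boxminus$ together with the vertices of $T$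 having two children. Define $\gamma\colon T\cup\{\boxminus\}\to\Lambda_T$ by: $\gamma(u)=u$ if $u\in\Lambda_T$; otherwise, if some vertex $w\in\Lambda_T\setminus\{\boxminus\}$ has $u$ in its right subtree, $\gamma(u)$ is the lowest (deepest) such $w$; otherwise $\gamma(u)=\boxminus$. For $v\in\Lambda_T$, the tree $T_v$ has vertex set $\gamma^{-1}(v)\setminus\{v\}$, where for $u,w$ in this set, $w$ is a left (resp. right) child of $u$ in $T_v$ iff $w$ lies in the left (resp. right) subtree of $u$ in $T$ and no element of $\gamma^{-1}(v)$ lies strictly between $u$ and $w$ on the path in $T$; each such vertex keeps its color from $T$, and $\boxminus$ in $T_v$ is given the color of $v$ in $T$ (the color of $\boxminus$ in $T$ if $v=\boxminus$). Each $T_v$ is an $I$-colored branch, and the multiset of the $T_v$ ($v\in\Lambda_T$), taken up to isomorphism of $I$-colored trees, is denoted $\mathsf{IF}(T)$. *)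

(* Defs.v *)
From Stdlib Require Import Permutation.
From mathcomp Require Import all_boot.

Set Implicit Arguments.
Unset Strict Implicit.
Unset Printing Implicit Defensive.

(* Binary plane trees with vertices colored in I, up to isomorphism:
   BLeaf is the empty tree, BNode c l r a root of color c with left
   subtree l and right subtree r (an empty subtree = no child). *)
Inductive btree (I : Type) : Type :=
  | BLeaf : btree I
  | BNode : I -> btree I -> btree I -> btree I.
Arguments BLeaf {I}.

(* An I-colored binary plane tree: the underlying tree together with
   the color of the special symbol ⊟ (the second component). *)
Definition ctree (I : Type) : Type := (btree I * I)%type.

Section Trees.
Variable I : Type.
Implicit Types (t : btree I) (p u w x : seq bool).

(* Vertices are addressed by their path from the root:
   false = go to the left child, true = go to the right child. *)
Fixpoint sub_at t p : option (btree I) :=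
  match t with
  | BLeaf => None
  | BNode _ l r =>
      match p with
      | [::] => Some t
      | b :: p' => sub_at (if b then r else l) p'
      end
  end.

Definition is_vertex t p : bool := if sub_at t p is Some _ then true else false.

Definition color_at (d : I) t p : I :=
  if sub_at t p is Some (BNode c _ _) then c else d.

Fixpoint vertices t : seq (seq bool) :=
  match t with
  | BLeaf => [::]
  | BNode _ l r => [::] :: (map (cons false) (vertices l) ++ map (cons true) (vertices r))
  end.

Definition has_two_children t p : bool :=
  if sub_at t p is Some (BNode _ (BNode _ _ _) (BNode _ _ _)) then true else false.

Definition in_right_subtree w u : bool := prefix (rcons w true) u.
Definition in_left_subtree w u : bool := prefix (rcons w false) u.
Definition strictly_between u w x : bool :=
  [&& prefix u x, prefix x w, x != u & x != w].

(* Elements of T ⊔ {⊟}: None is ⊟, Some p is the vertex at address p. *)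
Definition Lambda t : seq (option (seq bool)) :=
  None :: [seq Some p | p <- vertices t & has_two_children t p].

Definition gamma t (u : option (seq bool)) : option (seq bool) :=
  match u with
  | None => None
  | Some p =>
      if has_two_children t p then Some p else
      (* candidates w ∈ Λ_T \ {⊟} having p in their right subtree,
         listed by increasing depth (they are all ancestors of p) *)
      let cands := [seq w <- [seq take k p | k <- iota 0 (size p)]
                     | has_two_children t w && in_right_subtree w p] in
      if cands is [::] then None else Some (last [::] cands)
  end.

(* the tree T_v, for v ∈ Λ_T; dflt is a default color (never used). *)
Section Factor.
Variables (dflt : I) (t : btree I) (v : option (seq bool)).

Definition gamma_pre : seq (seq bool) :=
  [seq u <- vertices t | gamma t (Some u) == v].
(* vertex set of T_v: γ^{-1}(v) \ {v} *)
Definition fvert : seq (seq bool) :=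
  [seq u <- gamma_pre | Some u != v].

Definition no_between u w : bool := ~~ has (strictly_between u w) gamma_pre.
Definition lchild u w : bool := in_left_subtree u w && no_between u w.
Definition rchild u w : bool := in_right_subtree u w && no_between u w.

Fixpoint build (n : nat) u : btree I :=
  match n with
  | 0 => BLeaf
  | n'.+1 =>
      BNode (color_at dflt t u)
        (if [seq w <- fvert | lchild u w] is w :: _ then build n' w else BLeaf)
        (if [seq w <- fvert | rchild u w] is w :: _ then build n' w else BLeaf)
  end.

Definition froot : option (seq bool) :=
  if [seq u <- fvert | ~~ has (fun w => lchild w u || rchild w u) fvert] is r :: _
  then Some r else None.

Definition fshape : btree I :=
  if froot is Some r then build (size fvert) r else BLeaf.
End Factor.

Definition factor (T : ctree I) (v : option (seq bool)) : ctree I :=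
  (fshape T.2 T.1 v,
   if v is Some p then color_at T.2 T.1 p else T.2).

(* IF(T), the multiset of the T_v (v ∈ Λ_T), as a list up to permutation *)
Definition IF (T : ctree I) : seq (ctree I) :=
  [seq factor T v | v <- Lambda T.1].

(* insertion at address p: the subtree s at p is replaced by
   BNode c s t2, i.e. a new vertex v* of color c, left child v, right
   subtree t2 *)
Fixpoint ins_at t p (c : I) (t2 : btree I) : btree I :=
  match p with
  | [::] => BNode c t t2
  | b :: p' =>
      match t with
      | BLeaf => BLeaf
      | BNode a l r =>
          if b then BNode a l (ins_at r p' c t2) else BNode a (ins_at l p' c t2) r
      end
  end.

Definition insertion (T1 T2 : ctree I) (v : seq bool) : ctree I :=
  (ins_at T1.1 v T2.2 T2.1, T1.2).

End Trees.

(* Main.v *)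
Require Import Defs.
From Stdlib Require Import Permutation.
From mathcomp Require Import all_boot.
Set Implicit Arguments.
Unset Strict Implicit.
Unset Printing Implicit Defensive.

Fixpoint f1 (v p : seq bool) : seq bool :=
  match v, p with
  | [::], p => false :: p
  | x :: v', y :: p' => if x == y then y :: f1 v' p' else p
  | _ :: _, [::] => [::]
  end.
Definition f2 (v q : seq bool) := v ++ true :: q.

Lemma f1_prefix v a b : prefix (f1 v a) (f1 v b) = prefix a b.
Proof.
elim: v a b => [|x v IH] a b /=; first by rewrite ?eqxx.
case: a => [|y a]; case: b => [|z b] //=.
all: (try case: y); (try case: z); case: x => //=; rewrite ?IH //.
Qed.

Lemma f1_prefix_rcons v a b x : prefix (rcons (f1 v a) x) (f1 v b) = prefix (rcons a x) b.
Proof.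
elim: v a b x => [|x' v IH] a b x /=; first by rewrite ?eqxx.
case: a => [|y a]; case: b => [|z b] //=.
all: (try case: y); (try case: z); case: x; case: x' => //=; rewrite ?IH //.
all: by rewrite !prefix0s.
Qed.

Lemma f1_inj v : injective (f1 v).
Proof.
elim: v => [|x v IH] a b /=; first by case.
case: a => [|y a]; case: b => [|z b] //=.
all: (try case: y); (try case: z); case: x => //=.
all: try by [case=> /IH -> | case=> -> | move=> [] /IH -> | case ].
all: try (move=> H; exfalso; move: H; by elim: v {IH}).

Qed.

Lemma f1_prefix_v v b : prefix v (f1 v b) = prefix v b.
Proof.
elim: v b => [|x v IH] [|y b] //=; case: x y => [] [] //=; by rewrite IH.
Qed.

Lemma f1_cat v q : f1 v (v ++ q) = v ++ false :: q.
Proof. by elim: v => [|x v IH] //=; rewrite eqxx IH. Qed.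

Lemma f1_id v p : ~~ prefix v p -> f1 v p = p.
Proof.
elim: v p => [|x v IH] [|y p] //=; case: x y => [] [] //= H; by rewrite IH.
Qed.

Lemma f1_neq_v v p : f1 v p <> v.
Proof.
elim: v p => [|x v IH] [|y p] //=; case: x y => [] [] //= []; try done; exact: IH.
Qed.

Lemma f1_neq_f2 v p w : f1 v p <> f2 v w.
Proof.
rewrite /f2; elim: v p => [|x v IH] [|y p] //=; case: x y => [] [] //= []; try done; exact: IH.
Qed.

Lemma f2_inj v : injective (f2 v).
Proof. move=> a b; rewrite /f2; elim: v => [|x v IH] /=; [by case | by case=> /IH]. Qed.

Lemma f2_prefix v a b : prefix (f2 v a) (f2 v b) = prefix a b.
Proof. by rewrite /f2 prefix_catr // eqxx. Qed.

Lemma f2_rcons v a x : rcons (f2 v a) x = f2 v (rcons a x).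
Proof. by rewrite /f2 rcons_cat. Qed.

Section Look.
Variable I : Type.
Implicit Types (t : btree I).

Definition look t (p : seq bool) : option I :=
  if sub_at t p is Some (BNode c _ _) then Some c else None.

Lemma look_leaf p : look (@BLeaf I) p = None.
Proof. by rewrite /look; case: p. Qed.

Lemma look_node_nil c l r : look (BNode c l r) [::] = Some c.
Proof. by []. Qed.

Lemma look_node_cons c l r b p : look (BNode c l r) (b :: p) = look (if b then r else l) p.
Proof. by []. Qed.

Lemma is_vertexE t p : is_vertex t p = isSome (look t p).
Proof.
rewrite /is_vertex /look; elim: t p => [|c l IHl r IHr] [|b p] //=.
by case: b; [apply: IHr | apply: IHl].
Qed.

Lemma color_atE d t p : color_at d t p = odflt d (look t p).
Proof. by rewrite /color_at /look; case: (sub_at t p) => [[|]|]. Qed.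

Lemma sub_at_cat t p q : sub_at t (p ++ q) = obind (fun s => sub_at s q) (sub_at t p).
Proof.
elim: t p q => [|c l IHl r IHr] [|b p] q //=.
by case: b; [apply: IHr | apply: IHl].
Qed.

Lemma htcE t p : has_two_children t p =
  isSome (look t (rcons p false)) && isSome (look t (rcons p true)).
Proof.
rewrite /has_two_children /look -!cats1 !sub_at_cat.
by case: (sub_at t p) => [[|c [|? ? ?] [|? ? ?]]|].
Qed.

Lemma mem_vertices t p : p \in vertices t -> isSome (look t p).
Proof.
elim: t p => [|c l IHl r IHr] [|b p] //=.
rewrite in_cons mem_cat /= => /orP[/mapP[q Hq [Eb Ep]]|/mapP[q Hq [Eb Ep]]]; subst.
- exact: IHl.
- exact: IHr.
Qed.

Lemma look_some_root t p : isSome (look t p) -> isSome (look t [::]).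
Proof. by case: t => [|c l r]; rewrite ?look_leaf. Qed.

Variables (t2 : btree I) (c : I).

Lemma look_ins_root t v : isSome (look t v) -> isSome (look (ins_at t v c t2) [::]).
Proof. by case: t => [|a l r]; rewrite ?look_leaf //; case: v => [|[] v]. Qed.

Lemma look_f1 t v p : isSome (look t v) -> look (ins_at t v c t2) (f1 v p) = look t p.
Proof.
elim: v t p => [|x v IH] [|a l r] p //=; rewrite ?look_leaf //.
case: p => [|y p]; first by case: x.
rewrite look_node_cons => Hv.
case: x y Hv => [] [] Hv //=; rewrite ?look_node_cons ?IH //.
Qed.

Lemma look_f2 t v q : isSome (look t v) -> look (ins_at t v c t2) (f2 v q) = look t2 q.
Proof.
rewrite /f2; elim: v t => [|x v IH] [|a l r] //=; rewrite ?look_leaf //.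
rewrite look_node_cons => Hv.
case: x Hv => Hv /=; rewrite look_node_cons IH //.
Qed.

Lemma look_v t v : isSome (look t v) -> look (ins_at t v c t2) v = Some c.
Proof.
elim: v t => [|x v IH] [|a l r] //=; rewrite ?look_leaf //.
rewrite look_node_cons => Hv.
case: x Hv => Hv /=; rewrite look_node_cons IH //.
Qed.

Lemma look_f1_rcons t v p b : isSome (look t v) ->
  isSome (look (ins_at t v c t2) (rcons (f1 v p) b)) = isSome (look t (rcons p b)).
Proof.
elim: v t p b => [|x v IH] [|a l r] p b //=; rewrite ?look_leaf //.
rewrite look_node_cons => Hv.
case: p => [|y p] /=.
  case: x b Hv => [] [] Hv /=; rewrite !look_node_cons //=;
    rewrite (look_ins_root Hv); exact/esym/(look_some_root Hv).
case: x y Hv => [] [] Hv //=; rewrite ?look_node_cons ?IH //.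
Qed.

End Look.

Definition prefixes (p : seq bool) := [seq take k p | k <- iota 0 (size p)].

Lemma prefixes_cat a b : prefixes (a ++ b) = prefixes a ++ map (cat a) (prefixes b).
Proof.
rewrite /prefixes size_cat iotaD map_cat add0n; congr (_ ++ _).
  apply/eq_in_map => k; rewrite mem_iota => /andP[_ Hk]; rewrite take_cat.
  by rewrite add0n in Hk; rewrite Hk.
rewrite -{1}[size a]addn0 iotaDl -!map_comp; apply: eq_map => j /=.
by rewrite take_cat ltnNge leq_addr /= addKn.
Qed.

Lemma prefixes_cons b q : prefixes (b :: q) = [::] :: map (cons b) (prefixes q).
Proof. by rewrite -cat1s prefixes_cat. Qed.

Lemma mem_prefixes w p : w \in prefixes p -> prefix w p && (size w < size p).
Proof.
case/mapP=> k; rewrite mem_iota add0n => /andP[_ Hk] ->.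
by rewrite prefix_take size_take Hk.
Qed.

Section Gam.
Variable I : Type.
Implicit Types (t : btree I).

Definition cands t p := [seq w <- prefixes p | has_two_children t w && in_right_subtree w p].
Definition gof (s : seq (seq bool)) := if s is [::] then None else Some (last [::] s).

Lemma gammaE t p : gamma t (Some p) = if has_two_children t p then Some p else gof (cands t p).
Proof. by []. Qed.

Lemma gof_map f s : gof (map f s) = omap f (gof s).
Proof. by case: s => //= w s; rewrite last_map. Qed.

Lemma gof_catv X v Z : gof (X ++ v :: Z) = Some (last v Z).
Proof. by rewrite /gof; case: X => [|x X] //=; rewrite last_cat. Qed.

Variables (t t2 : btree I) (c : I) (v : seq bool).
Hypothesis Hv : isSome (look t v).
Hypothesis Ht2 : isSome (look t2 [::]).
Notation t' := (ins_at t v c t2).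

Definition g2 (o : option (seq bool)) := if o is Some w then Some (f2 v w) else Some v.

Lemma htc_f1 p : has_two_children t' (f1 v p) = has_two_children t p.
Proof. by rewrite !htcE !look_f1_rcons. Qed.

Lemma htc_f2 q : has_two_children t' (f2 v q) = has_two_children t2 q.
Proof. by rewrite !htcE !f2_rcons !look_f2. Qed.

Lemma f1_vv : f1 v v = rcons v false.
Proof. by have := f1_cat v [::]; rewrite cats0 cats1. Qed.

Lemma htc_v : has_two_children t' v.
Proof.
rewrite htcE -f1_vv look_f1 // Hv /=.
have -> : rcons v true = f2 v [::] by rewrite /f2 cats1.
by rewrite look_f2.
Qed.

Lemma gamma_v : gamma t' (Some v) = Some v.
Proof. by rewrite gammaE htc_v. Qed.

Lemma gamma_f1 p : gamma t' (Some (f1 v p)) = omap (f1 v) (gamma t (Some p)).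
Proof.
rewrite !gammaE htc_f1; case: (has_two_children t p) => //.
rewrite -gof_map; congr gof.
have HQ : forall w, (has_two_children t' (f1 v w) && in_right_subtree (f1 v w) (f1 v p))
   = (has_two_children t w && in_right_subtree w p).
  by move=> w; rewrite htc_f1 /in_right_subtree f1_prefix_rcons.
case: (boolP (prefix v p)) => Hp.
  have [q Eq] := prefixP Hp.
  have E1 : prefixes (f1 v p) =
      map (f1 v) (prefixes v) ++ v :: map (f1 v) (map (cat v) (prefixes q)).
    rewrite Eq f1_cat prefixes_cat prefixes_cons /= cats0; congr (_ ++ _ :: _).
      apply/esym/map_id_in => w /mem_prefixes /andP[_ Hs]; apply: f1_id.
      by apply/negP => /size_prefix; rewrite leqNgt Hs.
    by rewrite -!map_comp; apply: eq_map => w /=; rewrite f1_cat.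
  rewrite /cands E1 filter_cat /=.
  have -> : has_two_children t' v && in_right_subtree v (f1 v p) = false.
    rewrite /in_right_subtree Eq f1_cat -cats1 prefix_catr // eqxx /=.
    by rewrite andbF.
  rewrite (filter_map (f1 v) _ (prefixes v)) (filter_map (f1 v) _ (map (cat v) (prefixes q))).
  rewrite -map_cat; congr map.
  have -> : prefixes p = prefixes v ++ map (cat v) (prefixes q) by rewrite Eq prefixes_cat.
  by rewrite filter_cat; congr (_ ++ _); apply: eq_filter => w /=; rewrite HQ.
have E1 : prefixes (f1 v p) = map (f1 v) (prefixes p).
  rewrite (f1_id Hp); apply/esym/map_id_in => w /mem_prefixes /andP[Hw _].
  apply: f1_id; apply/negP => Hvw; move/negP: Hp; apply.
  exact: prefix_trans Hvw Hw.
rewrite /cands E1 (filter_map (f1 v) _ (prefixes p)); congr map; apply: eq_filter => w /=.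
by rewrite HQ.
Qed.

Lemma gamma_f2 q : gamma t' (Some (f2 v q)) = g2 (gamma t2 (Some q)).
Proof.
rewrite !gammaE htc_f2; case: (has_two_children t2 q) => //.
have E1 : prefixes (f2 v q) = prefixes v ++ v :: map (f2 v) (prefixes q).
  by rewrite /f2 prefixes_cat prefixes_cons /= cats0 -map_comp.
rewrite /cands E1 filter_cat /=.
have -> : has_two_children t' v && in_right_subtree v (f2 v q) = true.
  by rewrite htc_v /in_right_subtree /f2 -cats1 prefix_catr // eqxx /= prefix0s.
rewrite (filter_map (f2 v) _ (prefixes q)) gof_catv.
have -> : [seq w <- prefixes q | preim (f2 v) (fun w => has_two_children t' w && in_right_subtree w (f2 v q)) w]
   = [seq w <- prefixes q | has_two_children t2 w && in_right_subtree w q].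
  by apply: eq_filter => w /=; rewrite htc_f2 /in_right_subtree f2_rcons f2_prefix.
case: [seq w <- prefixes q | _] => [|y ys] //=.
by rewrite last_map.
Qed.

End Gam.

Lemma vertices_ins (I : Type) (t t2 : btree I) c v : isSome (look t v) ->
  exists A S B, vertices t = A ++ S ++ B /\
   vertices (ins_at t v c t2) =
     map (f1 v) A ++ v :: map (f1 v) S ++ map (f2 v) (vertices t2) ++ map (f1 v) B.
Proof.
elim: v t => [|x v IH] [|a l r] //=; rewrite ?look_leaf //.
  move=> _; exists [::], (vertices (BNode a l r)), [::]; split; first by rewrite cats0.
  by rewrite /= cats0.
rewrite look_node_cons => Hv.
have HF : forall X, map (f1 (x :: v)) (map (cons x) X) = map (cons x) (map (f1 v) X).
  by move=> X; rewrite -!map_comp; apply: eq_map => y /=; rewrite eqxx.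
have HT : forall X, map (f1 (x :: v)) (map (cons (~~ x)) X) = map (cons (~~ x)) X.
  by move=> X; rewrite -map_comp; apply: eq_map => y /=; case: x {HF IH Hv}.
have H2 : map (f2 (x :: v)) (vertices t2) = map (cons x) (map (f2 v) (vertices t2)).
  by rewrite -map_comp.
case: x HF HT H2 Hv => HF HT H2 Hv /=.
  have [A [S [B [E1 E2]]]] := IH r Hv.
  exists ([::] :: map (cons false) (vertices l) ++ map (cons true) A), (map (cons true) S),
    (map (cons true) B); split.
    by rewrite E1 !map_cat /= -!catA.
  rewrite E2 /= !map_cat HF H2 !HF.
  have := HT (vertices l); rewrite /= => ->.
  by rewrite !map_cat -!catA.
have [A [S [B [E1 E2]]]] := IH l Hv.
exists ([::] :: map (cons false) A), (map (cons false) S),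
  (map (cons false) B ++ map (cons true) (vertices r)); split.
  by rewrite E1 !map_cat /= -!catA.
rewrite E2 /= !map_cat HF H2 !HF.
have := HT (vertices r); rewrite /= => ->.
by rewrite !map_cat -!catA /= -!catA.
Qed.

Lemma fshape_transport (I : Type) (d d' : I) (t t' : btree I) v v' f :
  fvert t' v' = map f (fvert t v) ->
  {in fvert t v &, forall u w, lchild t' v' (f u) (f w) = lchild t v u w} ->
  {in fvert t v &, forall u w, rchild t' v' (f u) (f w) = rchild t v u w} ->
  {in fvert t v, forall u, color_at d' t' (f u) = color_at d t u} ->
  fshape d' t' v' = fshape d t v.
Proof.
move=> Ef Hl Hr Hc.
have Hb : forall n u, u \in fvert t v -> build d' t' v' n (f u) = build d t v n u.
  elim=> [|n IH] u Hu //=.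
  rewrite Hc // Ef !filter_map.
  have -> : [seq w <- fvert t v | preim f (lchild t' v' (f u)) w]
          = [seq w <- fvert t v | lchild t v u w].
    by apply: eq_in_filter => w Hw /=; apply: Hl.
  have -> : [seq w <- fvert t v | preim f (rchild t' v' (f u)) w]
          = [seq w <- fvert t v | rchild t v u w].
    by apply: eq_in_filter => w Hw /=; apply: Hr.
  congr BNode.
    case E: [seq w <- fvert t v | lchild t v u w] => [|w ws] //=.
    apply: IH; have : w \in [seq w <- fvert t v | lchild t v u w] by rewrite E mem_head.
    by rewrite mem_filter => /andP[].
  case E: [seq w <- fvert t v | rchild t v u w] => [|w ws] //=.
  apply: IH; have : w \in [seq w <- fvert t v | rchild t v u w] by rewrite E mem_head.
  by rewrite mem_filter => /andP[].
rewrite /fshape /Defs.froot Ef filter_map.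
have -> : [seq u <- fvert t v | preim f (fun u => ~~ has (fun w => lchild t' v' w u || rchild t' v' w u) (map f (fvert t v))) u]
   = [seq u <- fvert t v | ~~ has (fun w => lchild t v w u || rchild t v w u) (fvert t v)].
  apply: eq_in_filter => u Hu /=; rewrite has_map; congr negb.
  by apply: eq_in_has => w Hw /=; rewrite Hl ?Hr.
case E: [seq u <- fvert t v | _] => [|r rs] //=.
rewrite size_map Hb //.
have : r \in [seq u <- fvert t v | ~~ has (fun w => lchild t v w u || rchild t v w u) (fvert t v)]
  by rewrite E mem_head.
by rewrite mem_filter => /andP[].
Qed.

Lemma filter_false (T : Type) (a : pred T) s : (forall x, a x = false) -> filter a s = [::].
Proof. by move=> H; elim: s => //= x s ->; rewrite H. Qed.

Lemma omap_inj (A B : Type) (f : A -> B) : injective f -> injective (omap f).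
Proof. by move=> Hf [a|] [b|] //= [/Hf ->]. Qed.

Lemma prefix_f2_v v u : prefix (f2 v u) v = false.
Proof.
apply/negP => /size_prefix; rewrite /f2 size_cat /= addnS ltnNge leq_addr //.
Qed.

Lemma filter1 (T : Type) (a : pred T) x : filter a [:: x] = if a x then [:: x] else [::].
Proof. by []. Qed.

Section Main.
Variables (I : Type) (t t2 : btree I) (c : I) (v : seq bool).
Hypothesis Hv : isSome (look t v).
Hypothesis Ht2 : isSome (look t2 [::]).
Notation t' := (ins_at t v c t2).
Notation g2 := (g2 v).

Lemma g2_inj : injective g2.
Proof.
move=> [a|] [b|] //= [].
- by move/f2_inj ->.
- by move/(congr1 size); rewrite /f2 size_cat /= addnS => /eqP; rewrite eqn_leq ltnNge leq_addr.
- by move/(congr1 size); rewrite /f2 size_cat /= addnS => /eqP; rewrite eqn_leq ltnNge leq_addr andbF.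
Qed.

Lemma g2_neq_f1 o o' : (g2 o == omap (f1 v) o') = false.
Proof.
apply/negP; case: o => [a|]; case: o' => [b|] //= /eqP [].
- by move=> E; apply: (@f1_neq_f2 v b a).
- by move=> E; apply: (@f1_neq_v v b).
Qed.

Lemma gamma_pre_T1 v0 : gamma_pre t' (omap (f1 v) v0) = map (f1 v) (gamma_pre t v0).
Proof.
have [A [S [B [E1 E2]]]] := vertices_ins t2 c Hv.
rewrite /gamma_pre E1 E2 -cat1s !filter_cat !filter_map.
have -> : [seq u <- [:: v] | gamma t' (Some u) == omap (f1 v) v0] = [::].
  by rewrite filter1 gamma_v // (g2_neq_f1 None v0).
have Hf : forall u, preim (f1 v) (fun u => gamma t' (Some u) == omap (f1 v) v0) u
   = (gamma t (Some u) == v0).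
  by move=> u; rewrite -[LHS]/(gamma t' (Some (f1 v u)) == omap (f1 v) v0); rewrite gamma_f1 // (inj_eq (omap_inj (@f1_inj v))).
rewrite (filter_false (a := preim (f2 v) _)); last first.
  by move=> x; rewrite -[LHS]/(gamma t' (Some (f2 v x)) == omap (f1 v) v0); rewrite gamma_f2 // g2_neq_f1.
by rewrite !(eq_filter Hf) !map_cat.
Qed.

Lemma fvert_T1 v0 : fvert t' (omap (f1 v) v0) = map (f1 v) (fvert t v0).
Proof.
rewrite /fvert gamma_pre_T1 filter_map; congr map; apply: eq_filter => u /=.
by rewrite -[Some (f1 v u)]/(omap (f1 v) (Some u)) (inj_eq (omap_inj (@f1_inj v))).
Qed.

Lemma gamma_pre_T2 v0 : gamma_pre t' (g2 v0) =
  (if v0 is None then [:: v] else [::]) ++ map (f2 v) (gamma_pre t2 v0).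
Proof.
have [A [S [B [E1 E2]]]] := vertices_ins t2 c Hv.
rewrite /gamma_pre E2 -cat1s !filter_cat !filter_map.
have H1 : forall u, preim (f1 v) (fun u => gamma t' (Some u) == g2 v0) u = false.
  by move=> u; rewrite -[LHS]/(gamma t' (Some (f1 v u)) == g2 v0); rewrite gamma_f1 // eq_sym g2_neq_f1.
rewrite !(filter_false _ H1) !cat0s.
have Hf : forall u, preim (f2 v) (fun u => gamma t' (Some u) == g2 v0) u
   = (gamma t2 (Some u) == v0).
  by move=> u; rewrite -[LHS]/(gamma t' (Some (f2 v u)) == g2 v0); rewrite gamma_f2 // (inj_eq g2_inj).
rewrite (eq_filter Hf) cats0.
have -> : [seq u <- [:: v] | gamma t' (Some u) == g2 v0] = if v0 is None then [:: v] else [::].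
  rewrite filter1 gamma_v //.
  have -> : (Some v == g2 v0) = (g2 None == g2 v0) by [].
  by rewrite (inj_eq g2_inj); clear; case: v0.
by [].
Qed.

Lemma fvert_T2 v0 : fvert t' (g2 v0) = map (f2 v) (fvert t2 v0).
Proof.
rewrite /fvert gamma_pre_T2 filter_cat.
have -> : [seq u <- if v0 is None then [:: v] else [::] | Some u != g2 v0] = [::].
  by case: v0 => //=; rewrite eqxx.
rewrite cat0s filter_map; congr map; apply: eq_filter => u /=.
have -> : Some (f2 v u) = g2 (Some u) by [].
by rewrite (inj_eq g2_inj).
Qed.

Lemma lchild_T1 v0 u w : lchild t' (omap (f1 v) v0) (f1 v u) (f1 v w) = lchild t v0 u w.
Proof.
rewrite /lchild /no_between gamma_pre_T1 has_map /in_left_subtree f1_prefix_rcons.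
congr (_ && ~~ _); apply: eq_has => x /=.
by rewrite /strictly_between !f1_prefix !(inj_eq (@f1_inj v)).
Qed.

Lemma rchild_T1 v0 u w : rchild t' (omap (f1 v) v0) (f1 v u) (f1 v w) = rchild t v0 u w.
Proof.
rewrite /rchild /no_between gamma_pre_T1 has_map /in_right_subtree f1_prefix_rcons.
congr (_ && ~~ _); apply: eq_has => x /=.
by rewrite /strictly_between !f1_prefix !(inj_eq (@f1_inj v)).
Qed.

Lemma nb_T2 v0 u w : no_between t' (g2 v0) (f2 v u) (f2 v w) = no_between t2 v0 u w.
Proof.
rewrite /no_between gamma_pre_T2 has_cat has_map.
have -> : has (strictly_between (f2 v u) (f2 v w)) (if v0 is None then [:: v] else [::]) = false.
  by case: v0 => //=; rewrite /strictly_between prefix_f2_v.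
congr (~~ _); apply: eq_has => x /=.
by rewrite /strictly_between !f2_prefix !(inj_eq (@f2_inj v)).
Qed.

Lemma lchild_T2 v0 u w : lchild t' (g2 v0) (f2 v u) (f2 v w) = lchild t2 v0 u w.
Proof. by rewrite /lchild nb_T2 /in_left_subtree f2_rcons f2_prefix. Qed.

Lemma rchild_T2 v0 u w : rchild t' (g2 v0) (f2 v u) (f2 v w) = rchild t2 v0 u w.
Proof. by rewrite /rchild nb_T2 /in_right_subtree f2_rcons f2_prefix. Qed.

Lemma fvert_vertices (t0 : btree I) v0 u : u \in fvert t0 v0 -> u \in vertices t0.
Proof. by rewrite /fvert /gamma_pre !mem_filter => /andP[_ /andP[]]. Qed.

Variable d1 : I.

Lemma factor_T1 x : factor (t', d1) (omap (f1 v) x) = factor (t, d1) x.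
Proof.
rewrite /factor /=; congr pair.
  apply: fshape_transport.
  - exact: fvert_T1.
  - by move=> u w _ _; apply: lchild_T1.
  - by move=> u w _ _; apply: rchild_T1.
  - by move=> u _; rewrite !color_atE look_f1 //.
by case: x => //= p; rewrite !color_atE look_f1 //.
Qed.

Lemma factor_T2 x : (if x is Some w then w \in vertices t2 else true) ->
  factor (t', d1) (g2 x) = factor (t2, c) x.
Proof.
move=> Hx; rewrite /factor /=; congr pair.
  apply: fshape_transport.
  - exact: fvert_T2.
  - by move=> u w _ _; apply: lchild_T2.
  - by move=> u w _ _; apply: rchild_T2.
  - move=> u /fvert_vertices /mem_vertices; rewrite !color_atE look_f2 //.
    by case: (look t2 u).
case: x Hx => [p|] /=.
  move=> /mem_vertices; rewrite !color_atE look_f2 //.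
  by case: (look t2 p).
by rewrite color_atE look_v //.
Qed.

End Main.
Unset Implicit Arguments.

Lemma catE (T : Type) (s1 s2 : seq T) : cat s1 s2 = app s1 s2.
Proof. by elim: s1 => //= x s1 ->. Qed.

Lemma perm_aux (T : Type) (a b : T) X Y Z W :
  Permutation (a :: X ++ b :: Y ++ W ++ Z) ((a :: X ++ Y ++ Z) ++ b :: W).
Proof.
rewrite !catE /=; apply: perm_skip.
rewrite -!List.app_assoc; apply: Permutation_app_head.
apply: (Permutation_trans (Permutation_middle _ _ _)).
apply: Permutation_app_head.
exact: (Permutation_app_comm (b :: W) Z).
Qed.

Theorem proposition3p1 (I : Type) (T1 T2 : ctree I) (v : seq bool) :
  T1.1 <> BLeaf -> T2.1 <> BLeaf -> is_vertex T1.1 v ->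
  Permutation (IF (insertion T1 T2 v)) (IF T1 ++ IF T2).
Proof.
case: T1 => t d1; case: T2 => t2 c /= _ Ht2n Hvv.
have Hv : isSome (look t v) by rewrite -is_vertexE.
have Ht2 : isSome (look t2 [::]) by case: t2 Ht2n.
have [A [S [B [E1 E2]]]] := vertices_ins t2 c Hv.
set t' := ins_at t v c t2.
have HA : forall X, map (factor (t', d1)) [seq Some p | p <- map (f1 v) X & has_two_children t' p]
   = map (factor (t, d1)) [seq Some p | p <- X & has_two_children t p].
  move=> X; rewrite filter_map.
  rewrite (eq_filter (a1 := preim (f1 v) (has_two_children t')) (a2 := has_two_children t)); last first.
    by move=> p /=; rewrite htc_f1.
  rewrite -!map_comp; apply: eq_map => p /=.
  exact: (factor_T1 c Hv Ht2 d1 (Some p)).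
have HV : map (factor (t', d1)) [seq Some p | p <- map (f2 v) (vertices t2) & has_two_children t' p]
   = map (factor (t2, c)) [seq Some p | p <- vertices t2 & has_two_children t2 p].
  rewrite filter_map.
  rewrite (eq_filter (a1 := preim (f2 v) (has_two_children t')) (a2 := has_two_children t2)); last first.
    by move=> p /=; rewrite htc_f2.
  rewrite -!map_comp; apply/eq_in_map => p; rewrite mem_filter => /andP[_ Hp] /=.
  exact: (@factor_T2 _ _ _ c _ Hv Ht2 d1 (Some p) Hp).
rewrite /IF /insertion /Lambda /= -/t' E2 E1 !filter_cat -(cat1s v) !filter_cat !map_cat HV !HA.
rewrite filter1 htc_v //.
have -> : factor (t', d1) None = factor (t, d1) None by exact: (factor_T1 c Hv Ht2 d1 None).
have -> : map (factor (t', d1)) [seq Some p | p <- [:: v]] = [:: factor (t2, c) None].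
  by rewrite /= (@factor_T2 _ _ _ c _ Hv Ht2 d1 None erefl).
rewrite /=.
exact: perm_aux.
Qed.
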